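(* In the setting below, for $x\in V_1$, $\lambda\in F^\times$ and $y\in\mathrm{GSpin}(V_1)(F)$, the element $n(x)m(\lambda,y)$ lies in $\mathrm{Clif}(\Lambda)$ if and only if $y$, $\lambda y$ and $xy$ all lie in $\mathrm{Clif}(\Lambda_1)$.
   Context: $F$ is a $p$-adic local field with ring of integers $\mathcal{O}_F$. $V$ is a quasisplit quadratic space: $V=U^\vee\oplus V_E\oplus U$, $U^\vee=\mathrm{span}(e_1,\dots,e_n)$, $U=\mathrm{span}(f_1,\dots,f_n)$ isotropic, $(e_i,f_j)=\delta_{ij}$ for the bilinear form $(v,w)=q(v+w)-q(v)-q(w)$, $V_E\perp U^\vee\oplus U$ identified with $E$ with form $N_{E/F}$ ($E=F$, $N(t)=t^2$, or $E$ quadratic étale); $n\ge1$. $\Lambda=\bigoplus\mathcal{O}_Fe_i\oplus\mathcal{O}_E\oplus\bigoplus\mathcal{O}_Ff_i$; $V_1=\mathrm{span}(e_2,\dots,e_n,f_2,\dots,f_n)\oplus V_E$, so $V=Fe_1\oplus V_1\oplus Ff_1$; $\Lambda_1=\Lambda\cap V_1$. $\mathrm{Clif}(\cdot)$ denotes Clifford algebras (tensor algebra modulo $v\otimes v-q(v)$), $\mathrm{Clif}(V_1)\subseteq\mathrm{Clif}(V)$, and for a lattice $L$, $\mathrm{Clif}(L)$ is the $\mathcal{O}_F$-subalgebra generated by $L$. $\mathrm{GSpin}(V_1)(F)=\{g\in\mathrm{Clif}^+(V_1):g^*g\in F^\times,\ g^*V_1g\subseteq V_1\}$ with $*$ the order-reversing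 anti-involution. Products below are in $\mathrm{Clif}(V)$: $n(x)=1+f_1x$ for $x\in V_1$, and $m(\lambda,y)=(e_1f_1+\lambda f_1e_1)\,y$. *)

(* Defs.v *)
From HB Require Import structures.
From mathcomp Require Import all_boot all_order all_algebra all_field.
Set Implicit Arguments. Unset Strict Implicit. Unset Printing Implicit Defensive.
Import GRing.Theory.
Local Open Scope ring_scope.

(* p-adic local field: F is a field of characteristic 0 and O (= O_F)  *)
(* is a complete discrete valuation ring with fraction field F and     *)
(* finite residue field, i.e. F is a finite extension of Q_p.          *)
Definition padic_local_field (F : fieldType) (O : pred F) : Prop :=
  [/\
      forall k : nat, (k.+1)%:R != 0 :> F,
      [/\ O 1, forall a b, O a -> O b -> O (a - b)
        & forall a b, O a -> O b -> O (a * b)]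
    & exists2 pi : F, O pi /\ ~ O pi^-1 /\ pi != 0 &
      [/\
          forall x : F, x != 0 ->
            exists (u : F) (k : int), [/\ O u, O u^-1 & x = u * pi ^ k],
          (* finite residue field O / pi O *)
          exists s : seq F, all O s /\
            forall a, O a -> exists2 r, r \in s & O ((a - r) / pi)
        & (* completeness for the pi-adic topology *)
          forall a : nat -> F,
            (forall k, O (a k)) ->
            (forall k, O ((a k.+1 - a k) / pi ^+ k)) ->
            exists l : F, forall k, O ((l - a k) / pi ^+ k)]].

(* The algebra E: either E = F (with N(t) = t^2) or E a quadratic      *)
(* etale F-algebra (with N its norm).  E is given as a commutative     *)
Definition alg_norm (F : fieldType) (E : falgType F) (x : E) : F :=
  \det (passmx.mxof (vbasis {:E}) (vbasis {:E}) (amulr x)).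

Definition E_setting (F : fieldType) (E : falgType F) (N : E -> F) : Prop :=
  (forall x y : E, x * y = y * x) /\
  (
    (\dim {:E} = 1%N /\ forall c : F, N (c%:A) = c ^+ 2)
  \/
    (* E quadratic etale (reduced = etale since char F = 0), N = norm *)
    [/\ \dim {:E} = 2%N,
        (forall (x : E) (k : nat), x ^+ k = 0 -> x = 0)
      & forall x : E, N x = alg_norm x]).

(* O_E: the integral closure of O in E *)
Definition integral_over (F : fieldType) (O : pred F) (E : falgType F) (e : E) :=
  exists p : {poly F}, [/\ p \is monic, forall i, O p`_i
                         & (map_poly (in_alg E) p).[e] = 0].

(* The quadratic space V = U^vee (+) V_E (+) U, with U^vee = F^n (basis *)
(* e_i) and U = F^n (basis f_i); an element ((u, w), t) stands for     *)
(* sum_i u_i e_i + w + sum_i t_i f_i.                                  *)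
Section Space.
Variables (F : fieldType) (E : falgType F) (N : E -> F) (n : nat).

Definition Vsp : lmodType F := (('rV[F]_n * E) * 'rV[F]_n)%type.

Definition qV (v : Vsp) : F :=
  \sum_(i < n) v.1.1 0 i * v.2 0 i + N v.1.2.

Definition Lam (O : pred F) (v : Vsp) : Prop :=
  [/\ forall i, O (v.1.1 0 i), integral_over O v.1.2 & forall i, O (v.2 0 i)].

End Space.

Section Space1.
Variables (F : fieldType) (E : falgType F) (n : nat).
Local Notation V := (Vsp E n.+1).

Definition e1 : V := ((delta_mx 0 0, 0), 0).
Definition f1 : V := ((0, 0), delta_mx 0 0).

(* V_1 = span(e_2..e_n, f_2..f_n) (+) V_E *)
Definition V1 (v : V) : Prop := v.1.1 0 0 = 0 /\ v.2 0 0 = 0.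
End Space1.

Definition alg_morph (F : fieldType) (A B : algType F) (g : A -> B) : Prop :=
  linear g /\ monoid_morphism g.

Definition is_clifford (F : fieldType) (V : lmodType F) (q : V -> F)
    (C : algType F) (iota : V -> C) : Prop :=
  [/\ linear iota,
      forall v, iota v * iota v = (q v)%:A
    & forall (B : algType F) (f : V -> B), linear f ->
        (forall v, f v * f v = (q v)%:A) ->
        (exists g : C -> B, alg_morph g /\ forall v, g (iota v) = f v) /\
        (forall g1 g2 : C -> B, alg_morph g1 -> alg_morph g2 ->
           (forall v, g1 (iota v) = f v) -> (forall v, g2 (iota v) = f v) ->
           forall z, g1 z = g2 z)].

Inductive gen_alg (F : fieldType) (C : algType F) (R : pred F) (S : C -> Prop)
  : C -> Prop :=
| gen_one : gen_alg R S 1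
| gen_in x : S x -> gen_alg R S x
| gen_add x y : gen_alg R S x -> gen_alg R S y -> gen_alg R S (x + y)
| gen_mul x y : gen_alg R S x -> gen_alg R S y -> gen_alg R S (x * y)
| gen_scale a x : R a -> gen_alg R S x -> gen_alg R S (a *: x).

Section Clif.
Variables (F : fieldType) (V : lmodType F) (C : algType F) (iota : V -> C).

(* Clif(L) for an R-lattice L (R = O_F), resp. Clif(W) for an F-subspace *)
Definition Clif (R : pred F) (L : V -> Prop) : C -> Prop :=
  gen_alg R (fun z => exists2 v, L v & z = iota v).

Definition Clif_even (W : V -> Prop) : C -> Prop :=
  gen_alg predT (fun z => exists v w, [/\ W v, W w & z = iota v * iota w]).

Definition is_star (s : C -> C) : Prop :=
  [/\ linear s, s 1 = 1, (forall a b, s (a * b) = s b * s a),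
      (forall v, s (iota v) = iota v) & forall z, s (s z) = z].

Definition GSpin (W : V -> Prop) (g : C) : Prop :=
  Clif_even W g /\
  forall s, is_star s ->
    (exists2 c : F, c != 0 & s g * g = c%:A) /\
    (forall v, W v -> exists2 w, W w & s g * iota v * g = iota w).
End Clif.

(* Main.v *)
From HB Require Import structures.
Require Import Defs.
From mathcomp Require Import all_boot all_order all_algebra all_field.
Import GRing.Theory.
Local Open Scope ring_scope.

Section M2.
Variables (F : fieldType) (C : algType F).
Definition M2 := 'M[C]_2.
HB.instance Definition _ := GRing.NzRing.on M2.
Definition m2scale (a : F) (M : M2) : M2 := \matrix_(i, j) (a *: M i j).
Lemma m2scaleA a b v : m2scale a (m2scale b v) = m2scale (a * b) v.
Proof. by apply/matrixP => i j; rewrite !mxE scalerA. Qed.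
Lemma m2scale1 : left_id 1 m2scale.
Proof. by move=> v; apply/matrixP => i j; rewrite !mxE scale1r. Qed.
Lemma m2scaleDr : right_distributive m2scale +%R.
Proof. by move=> a u v; apply/matrixP => i j; rewrite !mxE scalerDr. Qed.
Lemma m2scaleDl v : {morph m2scale^~ v: a b / a + b}.
Proof. by move=> a b; apply/matrixP => i j; rewrite !mxE scalerDl. Qed.
HB.instance Definition _ := GRing.Zmodule_isLmodule.Build F M2
  m2scaleA m2scale1 m2scaleDr m2scaleDl.
Lemma m2scaleE (a : F) (M : M2) i j : (a *: M) i j = a *: M i j.
Proof. by rewrite mxE. Qed.
Lemma m2scaleAl (a : F) (u v : M2) : a *: (u * v) = (a *: u) * v.
Proof.
apply/matrixP => i j; rewrite !mxE scaler_sumr; apply: eq_bigr => k _.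
by rewrite m2scaleE scalerAl.
Qed.
HB.instance Definition _ := GRing.Lmodule_isLalgebra.Build F M2 m2scaleAl.
Lemma m2scaleAr (a : F) (u v : M2) : a *: (u * v) = u * (a *: v).
Proof.
apply/matrixP => i j; rewrite !mxE scaler_sumr; apply: eq_bigr => k _.
by rewrite m2scaleE scalerAr.
Qed.
HB.instance Definition _ := GRing.Lalgebra_isAlgebra.Build F M2 m2scaleAr.
Lemma m2mulE (A B : M2) i j : (A * B) i j = \sum_k A i k * B k j.
Proof. by rewrite !mxE. Qed.
End M2.
Arguments M2 {F} C.

Lemma I2P (i : 'I_2) : i = ord0 \/ i = ord_max.
Proof.
case: i => m h; case: m h => [|[|k]] h.
- by left; apply: val_inj.
- by right; apply: val_inj.
- by [].
Qed.

Lemma ab6 (Z : zmodType) (X Y P P' Q Q' : Z) :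
  X + Y - (P + P') - (Q + Q') = X - P - Q + (Y - P' - Q').
Proof. by rewrite !opprD (addrACA X Y) (addrACA (X - P)). Qed.

Lemma m2mul2 (F : fieldType) (C : algType F) (A B : M2 C) i j :
  (A * B) i j = A i ord0 * B ord0 j + A i ord_max * B ord_max j.
Proof.
rewrite m2mulE !big_ord_recl big_ord0 addr0.
by have -> : (lift ord0 (ord0 : 'I_1) : 'I_2) = ord_max by exact: val_inj.
Qed.

Lemma m2addE (F : fieldType) (C : algType F) (A B : M2 C) i j : (A + B) i j = A i j + B i j.
Proof. by rewrite mxE. Qed.

Lemma calc (F : fieldType) (C : algType F) (A B X Y Yl : M2 C) (x y yl : C) :
 (forall i j, A i j = if ((i : nat) == 0%N) && ((j : nat) == 1%N) then 1 else 0) ->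
 (forall i j, B i j = if ((i : nat) == 1%N) && ((j : nat) == 0%N) then 1 else 0) ->
 (forall i j, X i j = if (i : nat) == j then (if (i : nat) == 0%N then x else - x) else 0) ->
 (forall i j, Y i j = if (i : nat) == j then y else 0) ->
 (forall i j, Yl i j = if (i : nat) == j then yl else 0) ->
 let G := A * B * Y + B * A * Yl + B * (X * Y) in
 [/\ G ord0 ord0 = y, G ord_max ord_max = yl & G ord_max ord0 = x * y].
Proof.
move=> hA hB hX hY hYl G; rewrite /G.
rewrite !m2addE !m2mul2 !hA !hB !hX !hY !hYl /=.
by split; rewrite !(mul0r, mulr0, mul1r, mulr1, addr0, add0r).
Qed.

Section Main.
Variables (F : fieldType) (E : falgType F) (N : E -> F) (n : nat)
  (C : algType F) (iota : Vsp E n.+1 -> C).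
Local Notation V := (Vsp E n.+1).
Local Notation q := (qV N (n:=n.+1)).
Local Notation ee := (@e1 F E n).
Local Notation ff := (@f1 F E n).
Hypothesis hlin : linear iota.
Hypothesis hsq : forall v, iota v * iota v = (q v)%:A.

Lemma iotaD u v : iota (u + v) = iota u + iota v.
Proof. by have := hlin 1 u v; rewrite !scale1r. Qed.
Lemma iota0 : iota 0 = 0.
Proof. by apply: (addrI (iota 0)); rewrite -iotaD !addr0. Qed.
Lemma iotaZ a u : iota (a *: u) = a *: iota u.
Proof. by have := hlin a u 0; rewrite !addr0 iota0 addr0. Qed.
Lemma iotaN u : iota (- u) = - iota u.
Proof. by rewrite -scaleN1r iotaZ scaleN1r. Qed.
Lemma iotaB u v : iota (u - v) = iota u - iota v.
Proof. by rewrite iotaD iotaN. Qed.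

Lemma scalA_inj (a b : F) : a%:A = b%:A :> C -> a = b.
Proof.
move=> h; apply/eqP; rewrite -subr_eq0; apply/negPn/negP => hne.
have : (a - b)^-1 *: ((a - b)%:A : C) = 1 by rewrite scalerA mulVf // scale1r.
by rewrite scalerBl h subrr scaler0 => /esym/eqP; rewrite oner_eq0.
Qed.

Lemma q0 : q 0 = N 0.
Proof. by rewrite /qV big1 ?add0r // => i _; rewrite mxE mul0r. Qed.

Lemma N0 : N 0 = 0.
Proof.
apply: (@scalA_inj _ 0); rewrite -q0 -hsq iota0 mulr0 scale0r //.
Qed.

Lemma qe (u : V) a : q (u + a *: ee) = q u + a * u.2 0 0.
Proof.
rewrite /qV /e1 /= !scaler0 !addr0 [RHS]addrAC; congr (_ + _).
rewrite !big_ord_recl [RHS]addrAC; congr (_ + _); last first.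
  by apply: eq_bigr => i _; rewrite !mxE /= mulr0 addr0.
by rewrite !mxE /= mulr1 mulrDl.
Qed.

Lemma qf (u : V) b : q (u + b *: ff) = q u + b * u.1.1 0 0.
Proof.
rewrite /qV /f1 /= !scaler0 !addr0 [RHS]addrAC; congr (_ + _).
rewrite !big_ord_recl [RHS]addrAC; congr (_ + _); last first.
  by apply: eq_bigr => i _; rewrite !mxE /= mulr0 addr0.
by rewrite !mxE /= mulr1 mulrDr [_ * b]mulrC.
Qed.

Local Notation eC := (iota ee).
Local Notation fC := (iota ff).

Lemma polar u w : iota u * iota w + iota w * iota u = (q (u + w) - q u - q w)%:A.
Proof.
have := hsq (u + w); rewrite iotaD mulrDl !mulrDr !hsq !scalerBl => <-.
set a := iota u * iota w; set b := iota w * iota u.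
set c := (q u)%:A; set d := (q w)%:A.
rewrite addrA [c + a + b + d - c]addrAC addrK -(addrA c a b) [RHS]addrC.
by rewrite addKr.
Qed.

Lemma q_e1 : q ee = 0.
Proof. by have := qe 0 1; rewrite add0r scale1r q0 N0 mxE mulr0 addr0. Qed.
Lemma q_f1 : q ff = 0.
Proof. by have := qf 0 1; rewrite add0r scale1r q0 N0 mxE mulr0 addr0. Qed.
Lemma q_ef : q (ee + ff) = 1.
Proof. by have := qf ee 1; rewrite scale1r q_e1 add0r mul1r mxE. Qed.

Lemma ee2 : eC * eC = 0.
Proof. by rewrite hsq q_e1 scale0r. Qed.
Lemma ff2 : fC * fC = 0.
Proof. by rewrite hsq q_f1 scale0r. Qed.
Lemma efC : eC * fC + fC * eC = 1.
Proof. by rewrite polar q_ef q_e1 q_f1 !subr0 scale1r. Qed.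

Lemma x_e (x : V) : V1 x -> iota x * eC = - (eC * iota x).
Proof.
case=> _ h2; apply/eqP; rewrite -addr_eq0 polar.
by have := qe x 1; rewrite scale1r h2 mulr0 addr0 => ->; rewrite subrr q_e1 subr0 scale0r.
Qed.
Lemma x_f (x : V) : V1 x -> iota x * fC = - (fC * iota x).
Proof.
case=> h1 _; apply/eqP; rewrite -addr_eq0 polar.
by have := qf x 1; rewrite scale1r h1 mulr0 addr0 => ->; rewrite subrr q_f1 subr0 scale0r.
Qed.

Lemma key (x : V) (hx : V1 x) (lam : F) (y : C) :
  (1 + fC * iota x) * ((eC * fC + lam *: (fC * eC)) * y)
  = eC * fC * y + fC * eC * (lam *: y) + fC * (iota x * y).
Proof.
have fxf : fC * iota x * fC = 0.
  by rewrite -mulrA x_f // mulrN mulrA ff2 mul0r oppr0.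
have fef : fC * eC * fC = fC.
  have h : eC * fC = 1 - fC * eC by rewrite -efC addrK.
  by rewrite -mulrA h mulrBr mulr1 mulrA ff2 mul0r subr0.
have fxef : fC * iota x * eC * fC = fC * iota x.
  rewrite -(mulrA fC) x_e // mulrN mulNr mulrA -(mulrA _ (iota x)) x_f //.
  by rewrite mulrN opprK mulrA fef.
have inner : (1 + fC * iota x) * (eC * fC + lam *: (fC * eC))
    = eC * fC + lam *: (fC * eC) + fC * iota x.
  rewrite mulrDl mul1r mulrDr -scalerAr !mulrA fxef fxf mul0r scaler0 addr0.
  by [].
rewrite mulrA inner !mulrDl -scalerAl scalerAr.
by rewrite mulrA.
Qed.

Definition proj (v : V) : V := v - (v.1.1 0 0) *: ee - (v.2 0 0) *: ff.

Lemma iota_proj v : iota (proj v) = iota v - (v.1.1 0 0) *: eC - (v.2 0 0) *: fC.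
Proof. by rewrite !iotaB !iotaZ. Qed.

Lemma proj_V1 v : V1 (proj v).
Proof.
by split; rewrite /proj /e1 /f1 /= !mxE /= ?mulr1 ?mulr0 ?subr0 subrr.
Qed.

Lemma proj_id v : V1 v -> proj v = v.
Proof. by case=> h1 h2; rewrite /proj h1 h2 !scale0r !subr0. Qed.

Lemma q_proj v : q v = q (proj v) + v.1.1 0 0 * v.2 0 0.
Proof.
have hv : v = (proj v + (v.2 0 0) *: ff) + (v.1.1 0 0) *: ee by rewrite /proj !subrK.
have [h1 h2] := proj_V1 v.
set p := proj v in hv h1 h2 *.
rewrite {1}hv qe qf h1 mulr0 addr0 /= mxE h2 add0r /f1 /= !mxE /= mulr1.
by [].
Qed.

Definition fr (v : V) : M2 C := \matrix_(i < 2, j < 2)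
  if (i : nat) == 0%N then (if (j : nat) == 0%N then iota (proj v) else (v.1.1 0 0)%:A)
  else (if (j : nat) == 0%N then (v.2 0 0)%:A else - iota (proj v)).

Lemma fr_lin : linear fr.
Proof.
move=> a u w; apply/matrixP => i j.
rewrite mxE [in RHS]mxE m2scaleE !mxE /=.
have hp : iota (proj (a *: u + w)) = a *: iota (proj u) + iota (proj w).
  rewrite !iota_proj iotaD iotaZ /= !mxE !scalerDl -!scalerA !scalerBr.
  exact: ab6.
case: ifP => _; case: ifP => _.
- exact: hp.
- by rewrite !scalerDl scalerA.
- by rewrite !scalerDl scalerA.
- by rewrite hp opprD scalerN.
Qed.

Lemma fr_sq v : fr v * fr v = (q v)%:A.
Proof.
apply/matrixP => i j; rewrite m2mul2 m2scaleE !mxE /=.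
have hP := hsq (proj v).
case: (I2P i) => ->; case: (I2P j) => -> /=.
- by rewrite hP mulr_algl scalerA (q_proj v) [RHS]scalerDl.
- by rewrite mulr_algr mulr_algl scalerN subrr scaler0.
- by rewrite mulr_algr mulr_algl scalerN subrr scaler0.
- by rewrite mulrNN hP mulr_algl scalerA mulrC (q_proj v) [RHS]scalerDl addrC.
Qed.

Lemma frE v :
  [/\ fr v ord0 ord0 = iota (proj v), fr v ord0 ord_max = (v.1.1 0 0)%:A,
      fr v ord_max ord0 = (v.2 0 0)%:A & fr v ord_max ord_max = - iota (proj v)].
Proof. by split; rewrite mxE. Qed.

Lemma iota_proj_e : iota (proj ee) = 0.
Proof. by rewrite iota_proj /e1 /= !mxE /= scale1r scale0r subrr subr0. Qed.
Lemma iota_proj_f : iota (proj ff) = 0.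
Proof. by rewrite iota_proj /f1 /= !mxE /= scale1r scale0r subr0 subrr. Qed.

Variables (g : C -> M2 C).
Hypotheses (hgl : linear g) (hgm : GRing.monoid_morphism g)
  (hgi : forall v, g (iota v) = fr v).

Lemma gD a b : g (a + b) = g a + g b.
Proof. by have := hgl 1 a b; rewrite !scale1r. Qed.
Lemma g0 : g 0 = 0.
Proof. by apply: (addrI (g 0)); rewrite -gD !addr0. Qed.
Lemma gZ c a : g (c *: a) = c *: g a.
Proof. by have := hgl c a 0; rewrite !addr0 g0 addr0. Qed.
Lemma gM a b : g (a * b) = g a * g b.
Proof. by case: hgm => _ ->. Qed.
Lemma g1 : g 1 = 1.
Proof. by case: hgm. Qed.

Lemma g_even z : Clif_even iota (@V1 F E n) z -> forall i j, g z i j = z *+ (i == j).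
Proof.
elim=> {z}.
- by move=> i j; rewrite g1 mxE.
- move=> z [v [w [hv hw ->]]] i j.
  rewrite gM !hgi m2mul2 !mxE !proj_id //.
  case: hv => hv1 hv2; case: hw => hw1 hw2.
  rewrite hv1 hv2 hw1 hw2 !scale0r.
  by case: (I2P i) => ->; case: (I2P j) => -> /=;
    rewrite ?mulr0 ?mul0r ?addr0 ?add0r ?mulrNN ?mulr1n ?mulr0n.
- by move=> x y _ hx _ hy i j; rewrite gD mxE hx hy mulrnDl.
- move=> x y _ hx _ hy i j; rewrite gM m2mul2 !hx !hy.
  by case: (I2P i) => ->; case: (I2P j) => -> /=;
    rewrite ?mulr0n ?mulr1n ?mulr0 ?mul0r ?addr0 ?add0r.
- move=> a x _ _ hx i j; rewrite gZ m2scaleE hx.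
  by case: (i == j); rewrite ?mulr0n ?mulr1n ?scaler0.
Qed.

Variable (O : pred F).
Hypotheses (O1 : O 1) (Osub : forall a b, O a -> O b -> O (a - b))
  (Omul : forall a b, O a -> O b -> O (a * b)).
Local Notation L1 := (fun v => Lam O v /\ V1 v).

Lemma O0 : O 0.
Proof. by rewrite -(subrr 1); apply: Osub. Qed.
Lemma ON1 : O (-1).
Proof. by rewrite -sub0r; apply: Osub; [exact: O0 | exact: O1]. Qed.
Lemma Onat (b : bool) : O (b%:R).
Proof. by case: b; [exact: O1 | exact: O0]. Qed.

Lemma clif0 L : Clif iota O L 0.
Proof. by rewrite -(scale0r (1 : C)); apply: gen_scale; [exact: O0 | exact: gen_one]. Qed.
Lemma clifN L z : Clif iota O L z -> Clif iota O L (- z).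
Proof. by move=> h; rewrite -scaleN1r; apply: gen_scale; [exact: ON1 | exact: h]. Qed.
Lemma clif_alg L a : O a -> Clif iota O L (a%:A).
Proof. by move=> h; apply: gen_scale; [exact: h | exact: gen_one]. Qed.

Lemma Lam_proj v : Lam O v -> Lam O (proj v).
Proof.
case=> h1 h2 h3; split.
- move=> i; rewrite /proj /e1 /f1 /= !mxE.
  by apply: Osub; [apply: Osub; [exact: h1 | apply: Omul; [exact: h1|exact: Onat]] |
    apply: Omul; [exact: h3 | exact: O0]].
- have -> : (proj v).1.2 = v.1.2 by rewrite /proj /e1 /f1 /= !scaler0 !subr0.
  exact: h2.
- move=> i; rewrite /proj /e1 /f1 /= !mxE.
  by apply: Osub; [apply: Osub; [exact: h3 | apply: Omul; [exact: h1|exact: O0]] |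
    apply: Omul; [exact: h3 | exact: Onat]].
Qed.

Lemma g_clif z : Clif iota O (Lam O) z -> forall i j, Clif iota O L1 (g z i j).
Proof.
elim=> {z}.
- move=> i j; rewrite g1 mxE; case: (i == j); rewrite ?mulr1n ?mulr0n.
  + exact: gen_one.
  + exact: clif0.
- move=> z [v hv ->] i j; rewrite hgi.
  case: (I2P i) => ->; case: (I2P j) => ->; rewrite mxE /=.
  + by apply: gen_in; exists (proj v) => //; split; [exact: Lam_proj | exact: proj_V1].
  + by apply: clif_alg; case: hv.
  + by apply: clif_alg; case: hv.
  + by apply: clifN; apply: gen_in; exists (proj v) => //; split; [exact: Lam_proj | exact: proj_V1].
- by move=> x y _ hx _ hy i j; rewrite gD mxE; apply: gen_add; [exact: hx | exact: hy].
- move=> x y _ hx _ hy i j; rewrite gM m2mul2.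
  by apply: gen_add; apply: gen_mul; [exact: hx | exact: hy | exact: hx | exact: hy].
- by move=> a x ha _ hx i j; rewrite gZ m2scaleE; apply: gen_scale; [exact: ha | exact: hx].
Qed.

Lemma clif_mono z : Clif iota O L1 z -> Clif iota O (Lam O) z.
Proof.
elim=> {z}.
- exact: gen_one.
- by move=> z [v [hv _] ->]; apply: gen_in; exists v.
- by move=> x y _ hx _ hy; apply: gen_add.
- by move=> x y _ hx _ hy; apply: gen_mul.
- by move=> a x ha _ hx; apply: gen_scale.
Qed.

Lemma int0 : integral_over O (0 : E).
Proof.
exists 'X; split.
- exact: monicX.
- by move=> i; rewrite coefX; exact: Onat.
- by rewrite map_polyX hornerX.
Qed.

Lemma Lam_e : Lam O ee.
Proof. by split; [move=> i; rewrite /e1 /= mxE; exact: Onat | exact: int0 | move=> i; rewrite /e1 /= mxE; exact: O0]. Qed.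
Lemma Lam_f : Lam O ff.
Proof. by split; [move=> i; rewrite /f1 /= mxE; exact: O0 | exact: int0 | move=> i; rewrite /f1 /= mxE; exact: Onat]. Qed.

Lemma fr_e i j : fr ee i j = if ((i : nat) == 0%N) && ((j : nat) == 1%N) then 1 else 0.
Proof.
rewrite mxE iota_proj_e /e1 /=.
by case: (I2P i) => ->; case: (I2P j) => -> /=; rewrite ?mxE /= ?scale1r ?scale0r ?oppr0.
Qed.
Lemma fr_f i j : fr ff i j = if ((i : nat) == 1%N) && ((j : nat) == 0%N) then 1 else 0.
Proof.
rewrite mxE iota_proj_f /f1 /=.
by case: (I2P i) => ->; case: (I2P j) => -> /=; rewrite ?mxE /= ?scale1r ?scale0r ?oppr0.
Qed.
Lemma fr_x (x : V) i j : V1 x -> fr x i j =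
  if (i : nat) == j then (if (i : nat) == 0%N then iota x else - iota x) else 0.
Proof.
case=> h1 h2; rewrite mxE proj_id; last by split.
by case: (I2P i) => ->; case: (I2P j) => -> /=; rewrite ?h1 ?h2 ?scale0r.
Qed.

Lemma g_key (x : V) (hx : V1 x) (lam : F) (y : C)
  (hy : Clif_even iota (@V1 F E n) y) :
  let G := g (eC * fC * y + fC * eC * (lam *: y) + fC * (iota x * y)) in
  [/\ G ord0 ord0 = y, G ord_max ord_max = lam *: y & G ord_max ord0 = iota x * y].
Proof.
have hyE : forall i j, g y i j = if (i : nat) == j then y else 0.
  by move=> i j; rewrite (g_even y hy); case: (I2P i) => ->; case: (I2P j) => ->.
have hyl : forall i j, (lam *: g y) i j = if (i : nat) == j then lam *: y else 0.
  by move=> i j; rewrite m2scaleE hyE; case: ifP => _; rewrite ?scaler0.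
rewrite /= !gD !gM gZ !hgi.
exact: (@calc _ _ _ _ _ _ _ _ _ _ fr_e fr_f (fun i j => fr_x x i j hx) hyE hyl).
Qed.

Lemma main_iff (x : V) (hx : V1 x) (lam : F) (y : C)
  (hy : Clif_even iota (@V1 F E n) y) :
  Clif iota O (Lam O) ((1 + fC * iota x) * ((eC * fC + lam *: (fC * eC)) * y)) <->
  [/\ Clif iota O L1 y, Clif iota O L1 (lam *: y) & Clif iota O L1 (iota x * y)].
Proof.
rewrite (key x hx); split.
- move=> h; have hg := g_clif _ h.
  case: (g_key x hx lam y hy) => h00 h11 h10.
  split.
  + by rewrite -h00; apply: hg.
  + by rewrite -h11; apply: hg.
  + by rewrite -h10; apply: hg.
- case=> h1 h2 h3.
  have he : Clif iota O (Lam O) eC by apply: gen_in; exists ee => //; exact: Lam_e.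
  have hf : Clif iota O (Lam O) fC by apply: gen_in; exists ff => //; exact: Lam_f.
  apply: gen_add; [apply: gen_add|].
  + by apply: gen_mul; [apply: gen_mul | apply: clif_mono].
  + by apply: gen_mul; [apply: gen_mul | apply: clif_mono].
  + by apply: gen_mul; [ | apply: clif_mono].
Qed.
End Main.

Theorem claim3p2
  (F : fieldType) (O : pred F) (hF : padic_local_field O)
  (E : falgType F) (N : E -> F) (hE : E_setting N)
  (n : nat)
  (C : algType F) (iota : Vsp E n.+1 -> C)
  (hC : is_clifford (qV N (n:=n.+1)) iota)
  (x : Vsp E n.+1) (hx : V1 x)
  (lam : F) (hlam : lam != 0)
  (y : C) (hy : GSpin iota (@V1 F E n) y) :
  let nx := 1 + iota (@f1 F E n) * iota x in
  let m := (iota (@e1 F E n) * iota (@f1 F E n)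
            + lam *: (iota (@f1 F E n) * iota (@e1 F E n))) * y in
  Clif iota O (Lam O) (nx * m)
  <->
  [/\ Clif iota O (fun v => Lam O v /\ V1 v) y,
      Clif iota O (fun v => Lam O v /\ V1 v) (lam *: y)
    & Clif iota O (fun v => Lam O v /\ V1 v) (iota x * y)].
Proof.
move=> nx m.
case: hF => _ [O1 Osub Omul] _.
case: hC => hlin hsq huniv.
have [[g [[hgl hgm] hgi]] _] :=
  huniv (M2 C) (fr F E n C iota) (fr_lin F E n C iota hlin) (fr_sq F E N n C iota hsq).
case: hy => hy _.
exact: (main_iff F E N n C iota hlin hsq g hgl hgm hgi O O1 Osub Omul x hx lam y hy).
Qed.
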